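(* Let $\mathsf{K}$ be a quasivariety, $\mathbf{B}\in\mathsf{K}$, and $\mathbf{A}\leq\mathbf{B}$ full and not epic in $\mathsf{K}$. Then $\mathbf{A}$ is a subalgebra of some member of $\mathsf{K}_{\mathrm{RSI}}$, i.e., $\mathbf{A}\in\mathbb{S}(\mathsf{K}_{\mathrm{RSI}})$.
   Context: A quasivariety is a class of similar algebras closed under isomorphic copies, subalgebras, direct products and ultraproducts. $\mathbf{A}\leq\mathbf{B}$ is epic in $\mathsf{K}$ if for all $\mathbf{C}\in\mathsf{K}$ and homomorphisms $g,h\colon\mathbf{B}\to\mathbf{C}$, $g{\upharpoonright}_A=h{\upharpoonright}_A$ implies $g=h$. $\mathrm{Con}_{\mathsf{K}}(\mathbf{B})$ is the set of congruences $\theta$ of $\mathbf{B}$ with $\mathbf{B}/\theta\in\mathsf{K}$. $\mathbf{A}\leq\mathbf{B}$ is full in $\mathsf{K}$ if it is proper, almost total ($B=\mathrm{Sg}^{\mathbf{B}}(A\cup\{b\})$ for some $b$), and for every $\theta\in\mathrm{Con}_{\mathsf{K}}(\mathbf{B})$ with $\theta\neq\mathrm{id}_B$ and every $b\in B$ there is $a\in A$ with $\langle a,b\rangle\in\theta$. $\mathsf{K}_{\mathrm{RSI}}$ is the class of nontrivial members of $\mathsf{K}$ subdirectly irreducible relative to $\mathsf{K}$ (every subdirect embedding into a product of members of $\mathsf{K}$ has some projection that is an isomorphism). $\mathbb{S}$ denotes closure under (isomorphic copies of) subalgebras. *)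

(* Defs.v *)
From Stdlib Require Fin.
Set Implicit Arguments.
Unset Strict Implicit.

Record Sig := { sym : Type; arity : sym -> nat }.

Record Alg (s : Sig) := {
  car :> Type;
  op : forall o : sym s, (Fin.t (arity o) -> car) -> car }.

Arguments op {s} a o args.

Section UA.
Variable s : Sig.

Definition hom (A B : Alg s) (f : A -> B) : Prop :=
  forall (o : sym s) (args : Fin.t (arity o) -> A),
    f (op A o args) = op B o (fun i => f (args i)).

Definition injective (X Y : Type) (f : X -> Y) : Prop :=
  forall x y, f x = f y -> x = y.
Definition surjective (X Y : Type) (f : X -> Y) : Prop :=
  forall y, exists x, f x = y.

Definition Class := Alg s -> Prop.

Definition subuniverse (B : Alg s) (S : B -> Prop) : Prop :=
  forall (o : sym s) (args : Fin.t (arity o) -> B),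
    (forall i, S (args i)) -> S (op B o args).

Definition subalg (B : Alg s) (S : B -> Prop) (HS : subuniverse S) : Alg s :=
  {| car := {b : B | S b};
     op := fun o args =>
       exist _ (op B o (fun i => proj1_sig (args i)))
             (HS o _ (fun i => proj2_sig (args i))) |}.

Definition Sg (B : Alg s) (X : B -> Prop) (b : B) : Prop :=
  forall T : B -> Prop, subuniverse T -> (forall x, X x -> T x) -> T b.

Definition prodA (I : Type) (A : I -> Alg s) : Alg s :=
  {| car := forall i, A i;
     op := fun o args i => op (A i) o (fun k => args k i) |}.

Definition ultrafilter (I : Type) (U : (I -> Prop) -> Prop) : Prop :=
  U (fun _ => True) /\ ~ U (fun _ => False) /\
  (forall X Y : I -> Prop, U X -> (forall i, X i -> Y i) -> U Y) /\
  (forall X Y : I -> Prop, U X -> U Y -> U (fun i => X i /\ Y i)) /\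
  (forall X : I -> Prop, U X \/ U (fun i => ~ X i)).

(* An ultraproduct prod A / U is represented
   (up to isomorphism) by any algebra C with a surjective homomorphism
   prod A -> C whose kernel is the ultrafilter congruence. *)
Definition quasivariety (K : Class) : Prop :=
  (forall (A B : Alg s) (f : A -> B),
      hom f -> injective f -> surjective f -> K A -> K B) /\
  (forall (B : Alg s) (S : B -> Prop) (HS : subuniverse S),
      K B -> K (subalg HS)) /\
  (forall (I : Type) (A : I -> Alg s), (forall i, K (A i)) -> K (prodA A)) /\
  (forall (I : Type) (A : I -> Alg s) (U : (I -> Prop) -> Prop)
          (C : Alg s) (h : prodA A -> C),
      ultrafilter U -> (forall i, K (A i)) ->
      hom h -> surjective h ->
      (forall x y : prodA A, h x = h y <-> U (fun i => x i = y i)) ->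
      K C).

(* A (given as the subuniverse S of B) is epic in K. *)
Definition epic (K : Class) (B : Alg s) (S : B -> Prop) : Prop :=
  forall (C : Alg s) (g h : B -> C), K C -> hom g -> hom h ->
    (forall a, S a -> g a = h a) -> forall b, g b = h b.

(* theta in Con_K(B): theta is a congruence of B with B/theta in K, i.e.
   theta is the kernel of a surjective homomorphism onto a member of K. *)
Definition ConK (K : Class) {B : Alg s} (theta : B -> B -> Prop) : Prop :=
  exists (C : Alg s) (h : B -> C),
    K C /\ hom h /\ surjective h /\ (forall x y, theta x y <-> h x = h y).

Definition full (K : Class) (B : Alg s) (S : B -> Prop) : Prop :=
  (exists b, ~ S b) /\
  (exists b, forall x, Sg (fun y => S y \/ y = b) x) /\
  (forall theta : B -> B -> Prop, ConK K theta ->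
     ~ (forall x y, theta x y <-> x = y) ->
     forall b, exists a, S a /\ theta a b).

Definition RSI (K : Class) (D : Alg s) : Prop :=
  K D /\ (exists x y : D, x <> y) /\
  (forall (I : Type) (C : I -> Alg s) (f : D -> prodA C),
     (forall i, K (C i)) -> hom f -> injective f ->
     (forall i, surjective (fun x => f x i)) ->
     exists i, injective (fun x => f x i) /\ surjective (fun x => f x i)).

Definition in_S_RSI (K : Class) (A : Alg s) : Prop :=
  exists (D : Alg s) (f : A -> D), RSI K D /\ hom f /\ injective f.

End UA.

Arguments epic {s} K B S.
Arguments full {s} K B S.

(* Main.v *)
Require Import Defs.
From mathcomp Require classical_sets.
From Stdlib Require Import Classical ClassicalEpsilon FunctionalExtensionality PropExtensionality ProofIrrelevance.

Lemma zorn_plain (T : Type) (P : (T -> Prop) -> Prop) :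
  (forall F : (T -> Prop) -> Prop, (forall A, F A -> P A) ->
     (forall A B, F A -> F B -> (forall t, A t -> B t) \/ (forall t, B t -> A t)) ->
     P (fun t => exists2 A, F A & A t)) ->
  exists A, P A /\ forall B, (forall t, A t -> B t) -> ~ (forall t, B t -> A t) -> ~ P B.
Proof.
  intros H.
  destruct (@classical_sets.Zorn_bigcup T P) as [A [PA HA]].
  - intros F HF Htot. apply H.
    + exact HF.
    + intros A B FA FB. exact (Htot A B FA FB).
  - exists A. split; [exact PA|]. intros B H1 H2. apply HA. split; assumption.
Qed.

Set Implicit Arguments.
Unset Strict Implicit.
Section Proof.
Variable s : Sig.

Definition PF (I : Type) (F : (I -> Prop) -> Prop) : Prop :=
  F (fun _ => True) /\ ~ F (fun _ => False) /\
  (forall X Y : I -> Prop, F X -> (forall i, X i -> Y i) -> F Y) /\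
  (forall X Y : I -> Prop, F X -> F Y -> F (fun i => X i /\ Y i)).

Lemma PF_ext I (F G : (I -> Prop) -> Prop) : PF F -> (forall X, F X <-> G X) -> PF G.
Proof.
  intros [h1 [h2 [h3 h4]]] E. repeat split.
  - apply E, h1.
  - intro h. apply h2, E, h.
  - intros X Y HX HY. apply E. apply (h3 X Y); [apply E|]; assumption.
  - intros X Y HX HY. apply E. apply h4; apply E; assumption.
Qed.

Lemma ultra_lemma I (Base : (I -> Prop) -> Prop) : PF Base ->
  exists U, ultrafilter U /\ forall X, Base X -> U X.
Proof.
  intros HB.
  destruct (@zorn_plain (I -> Prop) (fun G => PF (fun X => G X \/ Base X)))
    as [A [PA Amax]].
  - intros F HF Htot.
    destruct HB as [b1 [b2 [b3 b4]]].
    repeat split.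
    + right; exact b1.
    + intros [[G FG GF]|BF]; [|exact (b2 BF)].
      destruct (HF G FG) as [_ [h2 _]]. apply h2. left. exact GF.
    + intros X Y [[G FG GX]|BX] XY.
      * destruct (HF G FG) as [_ [_ [h3 _]]].
        destruct (h3 X Y (or_introl GX) XY) as [GY|BY].
        -- left; exists G; assumption.
        -- right; exact BY.
      * right; exact (b3 X Y BX XY).
    + intros X Y [[G1 F1 G1X]|BX] [[G2 F2 G2Y]|BY].
      * destruct (Htot G1 G2 F1 F2) as [s12|s21].
        -- destruct (HF G2 F2) as [_ [_ [_ h4]]].
           destruct (h4 X Y (or_introl (s12 _ G1X)) (or_introl G2Y)) as [G|B].
           ++ left; exists G2; assumption.
           ++ right; exact B.
        -- destruct (HF G1 F1) as [_ [_ [_ h4]]].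
           destruct (h4 X Y (or_introl G1X) (or_introl (s21 _ G2Y))) as [G|B].
           ++ left; exists G1; assumption.
           ++ right; exact B.
      * destruct (HF G1 F1) as [_ [_ [_ h4]]].
        destruct (h4 X Y (or_introl G1X) (or_intror BY)) as [G|B].
        -- left; exists G1; assumption.
        -- right; exact B.
      * destruct (HF G2 F2) as [_ [_ [_ h4]]].
        destruct (h4 X Y (or_intror BX) (or_introl G2Y)) as [G|B].
        -- left; exists G2; assumption.
        -- right; exact B.
      * right; exact (b4 X Y BX BY).
  - set (U := fun X => A X \/ Base X).
    exists U. destruct PA as [u1 [u2 [u3 u4]]].
    split; [|intros X BX; right; exact BX].
    repeat split; try assumption.
    intros X. destruct (classic (U X)) as [UX|nUX]; [left; exact UX|].
    right. apply NNPP. intro nUnX.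
    set (G := fun Z : I -> Prop => exists Y, U Y /\ forall i, Y i -> X i -> Z i).
    assert (UG : forall Y, U Y -> G Y).
    { intros Y UY. exists Y. split; [exact UY|]. intros i H _; exact H. }
    assert (PG : PF G).
    { repeat split.
      - apply UG, u1.
      - intros [Y [UY HY]]. apply nUnX. apply (u3 Y); [exact UY|].
        intros i Yi Xi. exact (HY i Yi Xi).
      - intros X1 Y1 [Y [UY HY]] XY. exists Y. split; [exact UY|].
        intros i a b; apply XY, HY; assumption.
      - intros X1 Y1 [Y [UY HY]] [Y' [UY' HY']]. exists (fun i => Y i /\ Y' i).
        split; [apply u4; assumption|].
        intros i [a a'] b. split; [apply HY|apply HY']; assumption. }
    apply (Amax G).
    + intros X' AX'. apply UG. left; exact AX'.
    + intro GA. apply nUX. left. apply GA.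
      exists (fun _ => True). split; [exact u1|]. intros i _ H; exact H.
    + apply (PF_ext PG). intros Z; split; [intro H; left; exact H|].
      intros [H|H]; [exact H|]. apply UG; right; exact H.
Qed.

Lemma ultra_fin I (U : (I -> Prop) -> Prop) : ultrafilter U ->
  forall n (X : Fin.t n -> I -> Prop), (forall k, U (X k)) -> U (fun i => forall k, X k i).
Proof.
  intros [u1 [u2 [u3 [u4 u5]]]].
  induction n as [|n IH]; intros X HX.
  - apply (u3 _ _ u1). intros i _ k. apply (Fin.case0 (fun k => X k i) k).
  - apply (u3 (fun i => X Fin.F1 i /\ (forall k, X (Fin.FS k) i))).
    + apply u4; [apply HX|]. apply (IH (fun k => X (Fin.FS k))). intro k; apply HX.
    + intros i [h1 h2] k. apply (Fin.caseS' k (fun k => X k i)); [exact h1|exact h2].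
Qed.

Lemma ultra_exists I (E : I -> Alg s) U : ultrafilter U ->
  exists (Q : Alg s) (q : prodA E -> Q), hom q /\ surjective q /\
    forall x y, q x = q y <-> U (fun i => x i = y i).
Proof.
  intros HU. pose proof HU as [u1 [u2 [u3 [u4 u5]]]].
  set (R := fun x y : prodA E => U (fun i => x i = y i)).
  assert (Rr : forall x, R x x). { intro x; apply (u3 _ _ u1); reflexivity. }
  assert (Rs : forall x y, R x y -> R y x).
  { intros x y H; apply (u3 _ _ H); intros; symmetry; assumption. }
  assert (Rt : forall x y z, R x y -> R y z -> R x z).
  { intros x y z H1 H2. apply (u3 _ _ (u4 _ _ H1 H2)). intros i [a b]; congruence. }
  set (P := fun Pr : prodA E -> Prop => exists x, Pr = R x).
  set (qf := fun x : prodA E => exist P (R x) (ex_intro _ x eq_refl)).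
  assert (qE : forall x y, qf x = qf y <-> R x y).
  { intros x y; split.
    - intro H. assert (H' : proj1_sig (qf x) y = proj1_sig (qf y) y) by (rewrite H; reflexivity).
      change (R x y = R y y) in H'. rewrite H'. apply Rr.
    - intro H. apply subset_eq_compat. apply functional_extensionality. intro z.
      apply propositional_extensionality. split; intro H'.
      + exact (Rt _ _ _ (Rs _ _ H) H').
      + exact (Rt _ _ _ H H'). }
  set (rep := fun p : sig P => proj1_sig (constructive_indefinite_description _ (proj2_sig p))).
  assert (repE : forall p, qf (rep p) = p).
  { intros [Pr HP]. apply subset_eq_compat. unfold rep. simpl. symmetry.
    exact (proj2_sig (constructive_indefinite_description _ HP)). }
  set (Q := {| car := sig P;
               op := fun o args => qf (op (prodA E) o (fun k => rep (args k))) |}).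
  exists Q, qf. split; [|split].
  - intros o args. simpl. apply qE.
    assert (H : U (fun i => forall k, args k i = rep (qf (args k)) i)).
    { apply (ultra_fin HU (X:=fun k i => args k i = rep (qf (args k)) i)).
      intro k. apply Rs. apply qE. rewrite repE. reflexivity. }
    apply (u3 _ _ H). intros i Hi. simpl. f_equal. apply functional_extensionality.
    intro k; apply Hi.
  - intro p. exists (rep p). apply repE.
  - exact qE.
Qed.

Lemma ConK_ext (K : Class s) (B : Alg s) (t t' : B -> B -> Prop) :
  ConK K t -> (forall x y, t x y <-> t' x y) -> ConK K t'.
Proof.
  intros [C [h [KC [hh [sh E]]]]] E'. exists C, h. repeat split; try assumption.
  - intro H. apply E, E', H.
  - intro H. apply E', E, H.
Qed.

Lemma ConK_refl (K : Class s) (B : Alg s) (t : B -> B -> Prop) : ConK K t -> forall x, t x x.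
Proof. intros [C [h [_ [_ [_ E]]]]] x. apply E. reflexivity. Qed.

Lemma ConK_of_hom (K : Class s) (B Q : Alg s) (f : B -> Q) :
  quasivariety K -> K Q -> hom f -> ConK K (fun x y => f x = f y).
Proof.
  intros [_ [qS _]] KQ hf.
  set (Im := fun y : Q => exists x, f x = y).
  assert (HIm : subuniverse Im).
  { intros o args H.
    exists (op B o (fun k => proj1_sig (constructive_indefinite_description _ (H k)))).
    rewrite hf. f_equal. apply functional_extensionality. intro k.
    destruct (constructive_indefinite_description _ (H k)). simpl. assumption. }
  set (g := fun x => exist Im (f x) (ex_intro _ x eq_refl) : subalg HIm).
  exists (subalg HIm), g. repeat split.
  - apply qS, KQ.
  - intros o args. unfold g. simpl. apply subset_eq_compat. apply hf.
  - intros [y [x Hx]]. exists x. unfold g. apply subset_eq_compat. exact Hx.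
  - intro H. unfold g. apply subset_eq_compat. exact H.
  - intro H. apply (f_equal (@proj1_sig _ _)) in H. exact H.
Qed.


Lemma max_cong (K : Class s) (C : Alg s) (c1 c2 : C) :
  quasivariety K -> K C -> c1 <> c2 ->
  exists psi : C -> C -> Prop, ConK K psi /\ ~ psi c1 c2 /\
    forall theta, ConK K theta -> (forall x y, psi x y -> theta x y) ->
      ~ theta c1 c2 -> forall x y, theta x y -> psi x y.
Proof.
  intros qv KC neq.
  destruct (@zorn_plain (C * C)%type
    (fun A => ConK K (fun x y => A (x, y) \/ x = y) /\ ~ (A (c1, c2) \/ c1 = c2)))
    as [A [[PA1 PA2] Amax]].
  - intros F HF Htot. split.
    2:{ intros [[A FA Ac]|e]; [apply (proj2 (HF A FA)); left; exact Ac | exact (neq e)]. }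
    destruct (classic (exists A, F A)) as [[A0 FA0]|nF].
    2:{ apply (@ConK_ext K C (fun x y => x = y)).
        - exists C, (fun x => x). repeat split; auto.
          + intros y; exists y; reflexivity.
        - intros x y; split; [intro; right; assumption|].
          intros [[A FA _]|e]; [exfalso; apply nF; exists A; exact FA | exact e]. }
    set (I := {A | F A}).
    assert (X : forall j : I, {E : Alg s & {p : C -> E | K E /\ hom p /\ surjective p /\
       forall x y, (proj1_sig j (x, y) \/ x = y) <-> p x = p y}}).
    { intro j. destruct (constructive_indefinite_description _ (proj1 (HF _ (proj2_sig j))))
        as [E HE].
      destruct (constructive_indefinite_description _ HE) as [p Hp]. exists E, p. exact Hp. }
    set (E := fun j => projT1 (X j)).
    set (pi := fun j => proj1_sig (projT2 (X j)) : C -> E j).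
    assert (Hpi : forall j, K (E j) /\ hom (pi j) /\ surjective (pi j) /\
       forall x y, (proj1_sig j (x, y) \/ x = y) <-> pi j x = pi j y).
    { intro j. exact (proj2_sig (projT2 (X j))). }
    set (Base := fun Y : I -> Prop => exists k : I, forall j : I,
        (forall t, proj1_sig k t -> proj1_sig j t) -> Y j).
    assert (PB : PF Base).
    { repeat split.
      - exists (exist _ A0 FA0). intros; trivial.
      - intros [k Hk]. apply (Hk k). auto.
      - intros Y Z [k Hk] YZ. exists k. intros j Hj. apply YZ, Hk, Hj.
      - intros Y Z [k1 H1] [k2 H2].
        destruct (Htot _ _ (proj2_sig k1) (proj2_sig k2)) as [s12|s21].
        + exists k2. intros j Hj. split; [apply H1|apply H2]; auto.
        + exists k1. intros j Hj. split; [apply H1|apply H2]; auto. }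
    destruct (ultra_lemma PB) as [U [HU BU]].
    destruct (ultra_exists E HU) as [Q [q [hq [sq qE]]]].
    destruct qv as [qI [qS [qP qU]]].
    assert (KQ : K Q).
    { apply (qU I E U Q q HU); try assumption. intro j; apply Hpi. }
    set (phi := fun c => q (fun j => pi j c)).
    assert (hphi : hom phi).
    { intros o args. unfold phi.
      assert (Heq : (fun j => pi j (op C o args)) =
                    op (prodA E) o (fun k j => pi j (args k))).
      { apply functional_extensionality_dep. intro j. simpl. apply (proj1 (proj2 (Hpi j))). }
      rewrite Heq. apply hq. }
    apply (ConK_ext (@ConK_of_hom K C Q phi (conj qI (conj qS (conj qP qU))) KQ hphi)).
    intros x y. split.
    + intro H. unfold phi in H. apply qE in H.
      destruct (classic (exists j, pi j x = pi j y)) as [[j Hj]|nj].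
      * apply (proj2 (proj2 (proj2 (Hpi j)))) in Hj. destruct Hj as [h|e].
        -- left. exists (proj1_sig j); [exact (proj2_sig j)|exact h].
        -- right; exact e.
      * exfalso. destruct HU as [_ [u2 [u3 _]]]. apply u2. apply (u3 _ _ H).
        intros i Hi. apply nj. exists i; exact Hi.
    + intros [[A FA Axy]|e]; [|subst; reflexivity].
      unfold phi. apply qE. apply BU. exists (exist _ A FA). intros j Hj.
      apply (proj2 (proj2 (proj2 (Hpi j)))). left. apply Hj. exact Axy.
  - exists (fun x y => A (x, y) \/ x = y). split; [exact PA1|]. split; [exact PA2|].
    intros theta Kt sub nt x y txy. apply NNPP; intro npsi.
    apply (Amax (fun p => theta (fst p) (snd p))).
    + intros [u v] Auv. apply sub. left. exact Auv.
    + intro H. apply npsi. left. apply (H (x, y)). exact txy.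
    + split.
      * apply (ConK_ext Kt). intros u v; simpl; split; [intro; left; assumption|].
        intros [h|e]; [exact h| subst; apply (ConK_refl Kt)].
      * intros [h|e]; [exact (nt h)| exact (neq e)].
Qed.

End Proof.

Theorem mainTheorem7 (s : Sig) (K : Class s) (B : Alg s) (S : B -> Prop)
  (HS : subuniverse S) :
  quasivariety K -> K B -> full K B S -> ~ epic K B S ->
  in_S_RSI K (subalg HS).
Proof.
  intros qv KB Hfull Hnep.
  apply NNPP; intro Hgoal; apply Hnep; intros C g h KC hg hh agree b.
  apply NNPP; intro Hneq; apply Hgoal.
  destruct (max_cong qv KC Hneq) as [psi [Kpsi [npsi maxpsi]]].
  pose proof Kpsi as [D [pi [KD [hpi [spi Epi]]]]].
  assert (npi : pi (g b) <> pi (h b)). { intro H. apply npsi, Epi, H. }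
  exists D, (fun a => pi (g (proj1_sig a))). split; [|split].
  - split; [exact KD|]. split; [exists (pi (g b)), (pi (h b)); exact npi|].
    intros I E f KE hf injf surjf.
    apply NNPP; intro nex.
    assert (Hall : forall i, f (pi (g b)) i = f (pi (h b)) i).
    { intro i. set (th := fun x y => f (pi x) i = f (pi y) i).
      assert (Kth : ConK K th).
      { exists (E i), (fun x => f (pi x) i). repeat split.
        - apply KE.
        - intros o args. rewrite hpi, hf. reflexivity.
        - intro y. destruct (surjf i y) as [d Hd]. destruct (spi d) as [x Hx].
          exists x. rewrite Hx. exact Hd.
        - intro H; exact H.
        - intro H; exact H. }
      apply NNPP; intro nth.
      apply nex. exists i. split; [|apply surjf].
      intros d1 d2 Hd. destruct (spi d1) as [x1 <-]. destruct (spi d2) as [x2 <-].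
      apply Epi. apply (maxpsi th Kth).
      + intros x y Hxy. apply Epi in Hxy. unfold th. rewrite Hxy. reflexivity.
      + exact nth.
      + exact Hd. }
    apply npi, injf. apply functional_extensionality_dep. exact Hall.
  - intros o args. simpl. rewrite hg, hpi. reflexivity.
  - intros [x1 S1] [x2 S2] Hx. simpl in Hx.
    apply subset_eq_compat.
    apply NNPP; intro nx.
    set (Phi := fun x => (fun t : bool => if t then pi (g x) else pi (h x))
                 : prodA (fun _ : bool => D)).
    destruct qv as [qI [qS [qP qU]]].
    assert (hPhi : hom Phi).
    { intros o args. unfold Phi. apply functional_extensionality_dep. intros [|]; simpl.
      - rewrite hg, hpi. reflexivity.
      - rewrite hh, hpi. reflexivity. }
    pose proof (@ConK_of_hom s K B _ Phi (conj qI (conj qS (conj qP qU)))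
                 (qP bool (fun _ => D) (fun _ => KD)) hPhi) as Kth.
    destruct Hfull as [_ [_ Hf]].
    destruct (Hf _ Kth) with (b := b) as [a [Sa Hab]].
    + intro Hid. apply nx. apply Hid. unfold Phi.
      apply functional_extensionality_dep. intros [|].
      * exact Hx.
      * rewrite <- (agree x1 S1), <- (agree x2 S2). exact Hx.
    + apply npi.
      assert (E1 := f_equal (fun F => F true) Hab).
      assert (E2 := f_equal (fun F => F false) Hab).
      simpl in E1, E2. rewrite <- E1, <- E2, (agree a Sa). reflexivity.
Qed.
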